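(* Let $A\in\mathbb Z^{m\times n}$, let $d\in\mathbb N_+$ with $d\leq\min(m,n)$, and let $(K,D,L)$ be a Smith normal form for $A$. If there exists $V\in\mathbb Z^{m\times d}$ whose columns lie in $\operatorname{span}_{\mathbb Z}(A)$ and such that the $\mathbb Z$-span of the columns of $V^T$ is $\mathbb Z^d$, then $\textnormal{1-count}(D)\geq d$.
   Context: A Smith normal form of $A\in\mathbb Z^{m\times n}$ is a triple $(K,D,L)$ with $A=KDL$, $K\in\mathrm{GL}(m,\mathbb Z)$, $L\in\mathrm{GL}(n,\mathbb Z)$, and $D\in\mathbb Z^{m\times n}$ zero except for positive diagonal entries $\mathfrak d_1,\dots,\mathfrak d_r$ in the top-left positions with $\mathfrak d_i\mid\mathfrak d_{i+1}$. $\textnormal{1-count}(D)$ is the number of diagonal entries of $D$ equal to $1$. $\operatorname{span}_{\mathbb Z}(M)$ is the set of integer linear combinations of the columns of $M$. *)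

(* Defs.v *)
From HB Require Import structures.
From mathcomp Require Import all_boot all_order all_algebra.
Set Implicit Arguments. Unset Strict Implicit. Unset Printing Implicit Defensive.
Import Order.TTheory GRing.Theory Num.Theory.
Local Open Scope ring_scope.

Definition snf_diag (m n : nat) (D : 'M[int]_(m, n)) : Prop :=
  exists r : nat,
    [/\ (r <= minn m n)%N,
        (forall (i : 'I_m) (j : 'I_n), D i j != 0 -> (i : nat) = j /\ (i < r)%N),
        (forall (i : 'I_m) (j : 'I_n), (i : nat) = j -> (i < r)%N -> 0 < D i j) &
        (forall (i1 i2 : 'I_m) (j1 j2 : 'I_n),
            (i1 : nat) = j1 -> (i2 : nat) = j2 -> i2 = i1.+1 :> nat -> (i2 < r)%N ->
            (D i1 j1 %| D i2 j2)%Z)].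

Definition is_smith_normal_form (m n : nat) (A : 'M[int]_(m, n))
    (K : 'M[int]_m) (D : 'M[int]_(m, n)) (L : 'M[int]_n) : Prop :=
  [/\ A = K *m D *m L, K \in unitmx, L \in unitmx & snf_diag D].

Definition one_count (m n : nat) (D : 'M[int]_(m, n)) : nat :=
  #|[set i : 'I_m | [exists j : 'I_n, ((i : nat) == j) && (D i j == 1)]]|.

Definition zspan (m k : nat) (M : 'M[int]_(m, k)) (v : 'cV[int]_m) : Prop :=
  exists x : 'cV[int]_k, v = M *m x.

(* Main.v *)
Require Import Defs.
From mathcomp Require Import all_boot all_order all_algebra.
Import Order.TTheory GRing.Theory Num.Theory.
Local Open Scope ring_scope.

Lemma key (F : fieldType) (m n d c : nat) (P : 'M[int]_(d,m)) (D : 'M[int]_(m,n)) (Q : 'M[int]_(n,d)) :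
  P *m D *m Q = 1%:M -> (c <= m)%N -> (c <= n)%N ->
  map_mx (intr : int -> F) D = pid_mx c -> (d <= c)%N.
Proof.
move=> H cm cn HD.
have := congr1 (map_mx (intr : int -> F)) H.
rewrite !map_mxM map_mx1 HD => /mulmx1_min_rank.
by rewrite rank_pid_mx.
Qed.

Lemma getPQ (m n d : nat) (A : 'M[int]_(m, n))
    (K : 'M[int]_m) (D : 'M[int]_(m, n)) (L : 'M[int]_n) :
  A = K *m D *m L ->
  (exists V : 'M[int]_(m, d),
      (forall j : 'I_d, zspan A (col j V)) /\
      (forall v : 'cV[int]_d, zspan V^T v)) ->
  exists P Q, P *m D *m Q = 1%:M :> 'M[int]_d.
Proof.
move=> HA [V [H1 H2]].
have [x Hx] := fin_all_exists H1.
have [y Hy] := fin_all_exists (fun j : 'I_d => H2 (col j 1%:M)).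
pose X := \matrix_(i, j) x j i 0.
pose W := \matrix_(i, j) y j i 0.
have HV : V = A *m X.
  apply/matrixP => i j; have := congr1 (fun M : 'cV[int]_m => M i 0) (Hx j).
  rewrite !mxE => ->; apply: eq_bigr => k _; by rewrite /X !mxE.
have HW : V^T *m W = 1%:M.
  apply/matrixP => i j; have := congr1 (fun M : 'cV[int]_d => M i 0) (Hy j).
  rewrite !mxE => ->; apply: eq_bigr => k _; by rewrite /W !mxE.
exists (W^T *m K), (L *m X).
have := congr1 trmx HW; rewrite trmx_mul trmxK trmx1 HV HA => <-.
by rewrite !mulmxA.
Qed.

Lemma main2 (m n d : nat) (D : 'M[int]_(m,n)) (P : 'M[int]_(d,m)) (Q : 'M[int]_(n,d)) :
  P *m D *m Q = 1%:M -> (0 < d)%N -> (d <= minn m n)%N -> snf_diag D ->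
  (d <= one_count D)%N.
Proof.
destruct m as [|m']; first by rewrite min0n; case: d P Q => //.
destruct n as [|n']; first by rewrite minn0; case: d P Q => //.
move=> HPQ d0 dmin [r [Hr Hnz Hpos Hdiv]].
pose g k := D (inord k) (inord k).
have rm : (r <= m'.+1)%N by apply: leq_trans Hr (geq_minl _ _).
have rn : (r <= n'.+1)%N by apply: leq_trans Hr (geq_minr _ _).
have Hg k : (k < r)%N -> forall (i : 'I_m'.+1) (j : 'I_n'.+1), i = k :> nat -> j = k :> nat -> D i j = g k.
  move=> kr i j ei ej; rewrite /g.
  have -> : i = inord k by apply: val_inj; rewrite /= inordK ?ei //; apply: leq_trans kr rm.
  have -> : j = inord k by apply: val_inj; rewrite /= inordK ?ej //; apply: leq_trans kr rn.
  by [].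
have chain k i : (k <= i)%N -> (i < r)%N -> (g k %| g i)%Z.
  elim: i => [|i IH]; first by rewrite leqn0 => /eqP -> _.
  rewrite leq_eqVlt => /orP [/eqP -> //|ki] ir.
  apply: dvdz_trans (IH ki (ltnW ir)) _.
  have ir' : (i < r)%N := ltnW ir.
  have := Hdiv (inord i) (inord i.+1) (inord i) (inord i.+1).
  have im : (i < m'.+1)%N by apply: leq_trans ir' rm.
  have i1m : (i.+1 < m'.+1)%N by apply: leq_trans ir rm.
  have in_ : (i < n'.+1)%N by apply: leq_trans ir' rn.
  have i1n : (i.+1 < n'.+1)%N by apply: leq_trans ir rn.
  rewrite /g; apply; rewrite ?inordK //.
pose c := find (fun k => g k != 1) (iota 0 r).
have cr : (c <= r)%N by rewrite -[X in (_ <= X)%N](size_iota 0 r) find_size.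
have g1 k : (k < c)%N -> g k = 1.
  move=> kc; have := before_find 0 kc; rewrite nth_iota ?add0n; last by apply: leq_trans kc cr.
  by move/negbFE/eqP.
have cm : (c <= m'.+1)%N by apply: leq_trans cr rm.
have cn : (c <= n'.+1)%N by apply: leq_trans cr rn.
have ccount : (c <= one_count D)%N.
  rewrite /one_count.
  have <- : #|[set widen_ord cm k | k : 'I_c]| = c.
    by rewrite card_imset ?card_ord //; by move=> a b /(congr1 val) /= /val_inj.
  apply: subset_leq_card; apply/subsetP => x /imsetP [k _ ->].
  rewrite inE; apply/existsP; exists (widen_ord cn k) => /=.
  by rewrite eqxx /= (Hg k) ?g1 //; apply: leq_trans (ltn_ord k) cr.
have pidE (F : fieldType) : (forall z, (c < r)%N -> (g c %| z)%Z -> (z%:~R : F) = 0) ->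
    map_mx (intr : int -> F) D = pid_mx c.
  move=> Hz; apply/matrixP => i j; rewrite !mxE.
  case: (D i j =P 0) => [E|/eqP nz].
    rewrite E.
    case: (boolP (((i : nat) == j) && (i < c)%N)) => // /andP [/eqP eij ic].
    have := Hpos i j eij (leq_trans ic cr); by rewrite E ltxx.
  have [eij ir] := Hnz i j nz.
  rewrite eij eqxx /=; rewrite -eij.
  case: (ltnP i c) => ic.
    by rewrite (Hg i) // g1.
  have cr' : (c < r)%N by apply: leq_ltn_trans ic ir.
  rewrite Hz //; rewrite (Hg i) //; exact: chain.
case: (ltnP c r) => [cr'|rc].
  have hasg : has (fun k => g k != 1) (iota 0 r) by rewrite has_find size_iota.
  have gc1 : g c != 1 by have := nth_find 0 hasg; rewrite nth_iota // add0n.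
  have gcpos : 0 < g c.
    have cm' : (c < m'.+1)%N by apply: leq_trans cr' rm.
    have cn' : (c < n'.+1)%N by apply: leq_trans cr' rn.
    by rewrite /g; apply: Hpos; rewrite ?inordK.
  pose p := `|g c|%N.
  have E : g c = p%:Z by rewrite /p gtz0_abs.
  rewrite E in gc1 gcpos.
  have p1 : (1 < p)%N.
    move: gc1 gcpos; rewrite ltz_nat; case: (p) => [|[|p']] //.
  have qp := pdiv_prime p1.
  apply: leq_trans ccount.
  apply: (@key 'F_(pdiv p) _ _ _ _ _ _ _ HPQ cm cn); apply: pidE => z _ gz.
  apply/eqP; rewrite -(dvdz_pcharf (pchar_Fp qp)).
  apply: dvdz_trans gz; rewrite E /dvdz /=; exact: pdiv_dvd.
apply: leq_trans ccount.
apply: (@key rat _ _ _ _ _ _ _ HPQ cm cn); apply: pidE => z.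
by rewrite ltnNge rc.
Qed.

Theorem corollary6p12 (m n d : nat) (A : 'M[int]_(m, n))
    (K : 'M[int]_m) (D : 'M[int]_(m, n)) (L : 'M[int]_n) :
  (0 < d)%N -> (d <= minn m n)%N ->
  is_smith_normal_form A K D L ->
  (exists V : 'M[int]_(m, d),
      (forall j : 'I_d, zspan A (col j V)) /\
      (forall v : 'cV[int]_d, zspan V^T v)) ->
  (d <= one_count D)%N.
Proof.
move=> d0 dmin [HA _ _ Hsnf] HV.
have [P [Q HPQ]] := @getPQ m n d A K D L HA HV.
exact: (@main2 m n d D P Q HPQ d0 dmin Hsnf).
Qed.
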